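(* Let $n\ge 2$, $c\ge 2$, $d$ prime, and $f:\mathbb{Z}_c^n\to\mathbb{Z}_d$. The distribution $$p(\mathbf{m}|\mathbf{s})=\begin{cases} d^{1-n} & \text{if } \sum_{j=1}^n m_j\equiv f(\mathbf{s}) \pmod d,\\ 0&\text{otherwise},\end{cases}$$ is a vertex (extreme point) of the non-signaling polytope $\mathcal{NS}$ if and only if $f$ is not bi-partite linear.
   Context: $\mathcal{NS}$ is the convex polytope of conditional distributions $p(\mathbf{m}|\mathbf{s})$, $\mathbf{m}\in\mathbb{Z}_d^n$, $\mathbf{s}\in\mathbb{Z}_c^n$, that are non-signaling: for every subset $S$ of parties, the marginal of $(m_j)_{j\in S}$ depends only on $(s_j)_{j\in S}$. A bipartition $\{A,B\}$ of $\{1,\dots,n\}$ is a division into two disjoint non-empty sets whose union is $\{1,\dots,n\}$. The function $f$ is bi-partite linear if there exist a bipartition $\{A,B\}$ and functions $f^A$ of $\mathbf{s}^A=(s_j)_{j\in A}$ and $f^B$ of $\mathbf{s}^B=(s_j)_{j\in B}$, valued in $\mathbb{Z}_d$, with $f(\mathbf{s})=f^A(\mathbf{s}^A)+f^B(\mathbf{s}^B)$ (mod $d$) for all $\mathbf{s}$. *)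

(* Defs.v *)
From HB Require Import structures.
From mathcomp Require Import all_boot all_order all_algebra.
Set Implicit Arguments. Unset Strict Implicit. Unset Printing Implicit Defensive.
Import Order.TTheory GRing.Theory Num.Theory.
Local Open Scope ring_scope.

(* Outputs m in Z_d^n, inputs s in Z_c^n (inputs are mere labels: 'I_c). *)
Definition outs (n d : nat) := {ffun 'I_n -> 'Z_d}.
Definition ins (n c : nat) := {ffun 'I_n -> 'I_c}.

Definition behaviour (R : realFieldType) (n c d : nat) := outs n d -> ins n c -> R.

Definition is_cond_distr (R : realFieldType) n c d (p : behaviour R n c d) : Prop :=
  (forall m s, 0 <= p m s) /\ (forall s, \sum_(m : outs n d) p m s = 1).

Definition marginal (R : realFieldType) n c d (p : behaviour R n c d)
  (S : {set 'I_n}) (m0 : outs n d) (s : ins n c) : R :=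
  \sum_(m : outs n d | [forall j in S, m j == m0 j]) p m s.

Definition in_NS (R : realFieldType) n c d (p : behaviour R n c d) : Prop :=
  is_cond_distr p /\
  forall (S : {set 'I_n}) (m0 : outs n d) (s s' : ins n c),
    (forall j, j \in S -> s j = s' j) ->
    marginal p S m0 s = marginal p S m0 s'.

Definition is_vertex_NS (R : realFieldType) n c d (p : behaviour R n c d) : Prop :=
  in_NS p /\
  forall (q r : behaviour R n c d) (t : R),
    in_NS q -> in_NS r -> 0 < t -> t < 1 ->
    (forall m s, p m s = t * q m s + (1 - t) * r m s) ->
    (forall m s, q m s = p m s) /\ (forall m s, r m s = p m s).

Definition depends_only_on n c d (A : {set 'I_n}) (g : ins n c -> 'Z_d) : Prop :=
  forall s s' : ins n c, (forall j, j \in A -> s j = s' j) -> g s = g s'.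

Definition bipartite_linear n c d (f : ins n c -> 'Z_d) : Prop :=
  exists (A : {set 'I_n}) (fA fB : ins n c -> 'Z_d),
    [/\ A != set0, ~: A != set0,
        depends_only_on A fA, depends_only_on (~: A) fB &
        forall s, f s = fA s + fB s].

Definition pf (R : realFieldType) n c d (f : ins n c -> 'Z_d) : behaviour R n c d :=
  fun m s => if \sum_(j < n) m j == f s then ((d%:R : R) ^+ n.-1)^-1 else 0.

(* Main.v *)
Require Import Defs.
From HB Require Import structures.
From mathcomp Require Import all_boot all_order all_algebra.
From mathcomp Require Import ring.
Import Order.TTheory GRing.Theory Num.Theory.
Local Open Scope ring_scope.
Set Implicit Arguments. Unset Strict Implicit. Unset Printing Implicit Defensive.



Definition upd (I : finType) (T : Type) (s : {ffun I -> T}) (j : I) (v : T) : {ffun I -> T} :=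
  [ffun i => if i == j then v else s i].

Lemma updE (I : finType) (T : Type) (s : {ffun I -> T}) j v i :
  upd s j v i = if i == j then v else s i.
Proof. by rewrite ffunE. Qed.

Lemma single_change_ind (I : finType) (T : eqType) (U : Type) (C : {set I})
  (g : {ffun I -> T} -> U) :
  (forall (s : {ffun I -> T}) j v, j \notin C -> g (upd s j v) = g s) ->
  forall s s' : {ffun I -> T}, (forall j, j \in C -> s j = s' j) -> g s = g s'.
Proof.
move=> H s s' E.
have [k Hk] : exists k, #|[set j | s j != s' j]| = k by eexists.
elim: k s E Hk => [|k IH] s E Hk.
  congr g; apply/ffunP => j; apply/eqP; apply: contraT => ne.
  by move: Hk; rewrite (cardsD1 j) inE ne.
have : (0 < #|[set j | s j != s' j]|)%N by rewrite Hk.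
case/card_gt0P => j; rewrite inE => nj.
have jC : j \notin C by apply: contra nj => /E ->.
rewrite -(H s j (s' j) jC); apply: IH.
  move=> i iC; rewrite updE; case: (i =P j) => [->|_]; [by [] | exact: E].
have -> : [set i | upd s j (s' j) i != s' i] = [set i | s i != s' i] :\ j.
  apply/setP => i; rewrite !inE updE; case: (i =P j) => [->|_]; by rewrite ?eqxx.
by move: Hk; rewrite (cardsD1 j) inE nj add1n => -[].
Qed.
Lemma Zd_card d : prime d -> #|'Z_d| = d.
Proof. by move=> pd; rewrite card_ord Zp_cast // prime_gt1. Qed.

Lemma Zd_unit d (t : 'Z_d) : prime d -> t != 0 -> t \is a GRing.unit.
Proof.
move=> pd nt; rewrite -[t]natr_Zp unitZpE ?prime_gt1 // prime_coprime //.
apply/negP => /dvdnP [k kt].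
have lt : (t < d)%N by have := ltn_ord t; rewrite [X in (_ < X)%N]Zp_cast // prime_gt1.
case: k kt => [|k] kt.
  by move: nt; rewrite -[t]natr_Zp /= kt mul0n.
by move: lt; rewrite kt mulSn ltnNge leq_addr.
Qed.

Lemma Zd_stab d (U : Type) (G : 'Z_d -> U) (t : 'Z_d) : prime d -> t != 0 ->
  (forall x, G (x + t) = G x) -> forall x, G x = G 0.
Proof.
move=> pd nt H x.
have Hi : forall i : nat, G (t *+ i) = G 0.
  elim=> [|i IH]; first by rewrite mulr0n.
  by rewrite mulrSr H.
rewrite -(Hi (nat_of_ord (x / t))) -mulr_natr natr_Zp mulrC divrK //.
exact: Zd_unit.
Qed.

Lemma Zd_mul_eq0 d (a b : 'Z_d) : prime d -> a != 0 -> a * b = 0 -> b = 0.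
Proof.
move=> pd na ab; have ua := Zd_unit pd na.
by rewrite -(mulKr ua b) ab mulr0.
Qed.
Lemma card_fiber (T V : finType) (L : T -> V) :
  (forall v v', exists h : T -> T, injective h /\ forall x, (L (h x) == v') = (L x == v)) ->
  forall v, (#|[set x | L x == v]| * #|V|)%N = #|T|.
Proof.
move=> H.
have le : forall v v', (#|[set x | L x == v]| <= #|[set x | L x == v']|)%N.
  move=> v v'; have [h [ih hL]] := H v v'.
  rewrite -(card_imset _ ih); apply: subset_leq_card; apply/subsetP => y.
  by case/imsetP => x; rewrite !inE => Lx ->; rewrite hL.
have eqc : forall v v', #|[set x | L x == v]| = #|[set x | L x == v']|.
  by move=> v v'; apply/eqP; rewrite eqn_leq !le.
move=> v; rewrite -[RHS]sum1_card (partition_big L predT) //=.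
rewrite mulnC -sum_nat_const; apply: eq_bigr => v' _.
rewrite (eqc v v') -sum1_card; apply: eq_bigl => x; by rewrite inE.
Qed.

Lemma sum_updw (I : finType) (K : comPzRingType) (P : pred I) (a m : {ffun I -> K}) j (e : K) :
  \sum_(i | P i) a i * upd m j (m j + e) i = \sum_(i | P i) a i * m i + (if P j then a j * e else 0).
Proof.
have -> : \sum_(i | P i) a i * upd m j (m j + e) i =
          \sum_(i | P i) (a i * m i + (if i == j then a i * e else 0)).
  by apply: eq_bigr => i _; rewrite updE; case: eqP => [->|_]; rewrite ?mulrDr ?addr0.
rewrite big_split /=; congr (_ + _).
rewrite -big_mkcondr /=.
case Pj: (P j).
  rewrite (big_pred1 j) // => i /=; case: eqP => [->|_]; by rewrite ?Pj ?andbT ?andbF.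
rewrite big_pred0 // => i /=; case: eqP => [->|_]; by rewrite ?Pj ?andbF.
Qed.

Lemma sum_upd (I : finType) (K : comPzRingType) (P : pred I) (m : {ffun I -> K}) j (e : K) :
  \sum_(i | P i) upd m j (m j + e) i = \sum_(i | P i) m i + (if P j then e else 0).
Proof.
have -> : \sum_(i | P i) upd m j (m j + e) i =
          \sum_(i | P i) (m i + (if i == j then e else 0)).
  by apply: eq_bigr => i _; rewrite updE; case: eqP => [->|_]; rewrite ?addr0.
rewrite big_split /=; congr (_ + _).
rewrite -big_mkcondr /=.
case Pj: (P j).
  rewrite (big_pred1 j) // => i /=; case: eqP => [->|_]; by rewrite ?Pj ?andbT ?andbF.
rewrite big_pred0 // => i /=; case: eqP => [->|_]; by rewrite ?Pj ?andbF.
Qed.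

Lemma upd_inj (I : finType) (K : comPzRingType) j (e : K) :
  injective (fun m : {ffun I -> K} => upd m j (m j + e)).
Proof.
move=> m m' /ffunP H; apply/ffunP => i.
have := H i; rewrite !updE; case: eqP => [->|_] // _.
by have := H j; rewrite !updE eqxx => /addIr.
Qed.

Definition dot n d (u v : outs n d) : 'Z_d := \sum_i u i * v i.

Lemma card_dot n d (z : outs n d) (b : 'Z_d) : prime d -> (0 < n)%N -> z != 0 ->
  #|[set a : outs n d | dot z a == b]| = (d ^ n.-1)%N.
Proof.
move=> pd n0 nz.
have [j zj] : exists j, z j != 0.
  apply/existsP; apply: contraR nz; rewrite negb_exists => /forallP H.
  by apply/eqP/ffunP => i; rewrite ffunE; apply/eqP; move: (H i); rewrite negbK.
have uz := Zd_unit pd zj.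
have Hh : forall v v' : 'Z_d, exists h : outs n d -> outs n d,
    injective h /\ forall x, (dot z (h x) == v') = (dot z x == v).
  move=> v v'; exists (fun a : outs n d => upd a j (a j + (v' - v) / z j)); split.
    exact: upd_inj.
  move=> a; rewrite /dot (sum_updw predT) /= mulrC divrK //.
  apply/eqP/eqP => [h|->]; last by rewrite addrC subrK.
  by apply: (addIr (v' - v)); rewrite h addrC subrK.
have := card_fiber Hh b.
set N := #|[set x | dot z x == b]|.
rewrite card_ffun !card_ord Zp_cast ?prime_gt1 // => E.
have e : (d ^ n = d ^ n.-1 * d)%N by rewrite -expnSr prednK.
by apply/eqP; rewrite -(eqn_pmul2r (prime_gt0 pd)) E e.
Qed.



Lemma sum_shift (n d : nat) (R : nmodType) (P : pred (outs n d)) (F : outs n d -> R) j (e : 'Z_d) :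
  (forall m, P (upd m j (m j + e)) = P m) ->
  \sum_(m | P m) F (upd m j (m j + e)) = \sum_(m | P m) F m.
Proof.
move=> HP; rewrite [RHS](reindex_inj (@upd_inj _ _ j e)) /=.
by apply: eq_bigl => m; rewrite HP.
Qed.

Lemma agree_upd n d (S : {set 'I_n}) (m m0 : outs n d) j (e : 'Z_d) : j \notin S ->
  [forall i in S, upd m j (m j + e) i == m0 i] = [forall i in S, m i == m0 i].
Proof.
move=> jS; apply: eq_forallb => i; rewrite updE; case: (i =P j) => [->|_] //.
by rewrite (negbTE jS).
Qed.

Definition ones n d : outs n d := [ffun _ => 1].

Lemma dot_ones n d (m : outs n d) : dot (ones n d) m = \sum_j m j.
Proof. by apply: eq_bigr => i _; rewrite ffunE mul1r. Qed.

Lemma ones_neq0 n d : prime d -> (0 < n)%N -> ones n d != 0.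
Proof.
move=> pd n0; apply/negP => /eqP/ffunP/(_ (Ordinal n0)); rewrite !ffunE => /eqP.
by rewrite oner_eq0.
Qed.

Lemma shift_eq (K : zmodType) (x b b' : K) : (x + (b' - b) == b') = (x == b).
Proof.
apply/eqP/eqP => [h|->]; last by rewrite addrC subrK.
by rewrite -(addrK (b' - b) x) h opprB addrC subrK.
Qed.

Definition kap (R : realFieldType) n d : R := ((d%:R : R) ^+ n.-1)^-1.

Lemma kap_gt0 R n d : prime d -> 0 < kap R n d.
Proof. by move=> pd; rewrite invr_gt0 exprn_gt0 // ltr0n prime_gt0. Qed.

Lemma kap_card R n d : prime d -> (d ^ n.-1)%:R * kap R n d = 1.
Proof.
move=> pd; rewrite /kap natrX mulfV // expf_neq0 // pnatr_eq0 -lt0n prime_gt0 //.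
Qed.

Lemma sum_fiber_kap R n d (z : outs n d) b : prime d -> (0 < n)%N -> z != 0 ->
  \sum_(m : outs n d) (if dot z m == b then kap R n d else 0) = 1.
Proof.
move=> pd n0 nz; rewrite -big_mkcond /=.
rewrite (eq_bigl (mem [set m | dot z m == b])); last by move=> m; rewrite !inE.
by rewrite sumr_const card_dot // -mulr_natl kap_card.
Qed.

Lemma pf_NS R n c d (f : ins n c -> 'Z_d) : prime d -> (0 < n)%N -> in_NS (pf R f).
Proof.
move=> pd n0; split; first split.
- move=> m s; rewrite /pf; case: ifP => _ //; exact/ltW/kap_gt0.
- move=> s; rewrite -(sum_fiber_kap R (f s) pd n0 (ones_neq0 pd n0)).
  by apply: eq_bigr => m _; rewrite dot_ones.
- move=> S m0 s s' E; rewrite /marginal /pf.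
  have [/forallP allS | ] := boolP [forall j, j \in S].
    suff -> : s = s' by [].
    by apply/ffunP => j; apply: E.
  rewrite negb_forall => /existsP [j jS].
  pose M (b : 'Z_d) := \sum_(m : outs n d | [forall j0 in S, m j0 == m0 j0])
                  (if \sum_j m j == b then kap R n d else 0).
  have HM : forall b b', M b = M b'.
    move=> b b'; rewrite /M -(@sum_shift n d _ _ _ j (b - b')); last first.
      by move=> m; exact: agree_upd.
    by apply: eq_bigr => m _; rewrite (sum_upd predT) /= shift_eq.
  exact: (HM (f s) (f s')).
Qed.

Lemma NS_comb R n c d (p q r : behaviour R n c d) (al be : R) :
  in_NS p -> in_NS q -> al + be = 1 ->
  (forall m s, r m s = al * p m s + be * q m s) -> (forall m s, 0 <= r m s) -> in_NS r.
Proof.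
move=> [[_ sp] mp] [[_ sq] mq] ab E r0; split; first split => //.
  move=> s; under eq_bigr do rewrite E.
  by rewrite big_split /= -!mulr_sumr sp sq !mulr1.
move=> S m0 s s' H; rewrite /marginal.
under eq_bigr do rewrite E.
under [RHS]eq_bigr do rewrite E.
rewrite !big_split /= -!mulr_sumr.
by have := mp S m0 s s' H; have := mq S m0 s s' H; rewrite /marginal => -> ->.
Qed.

Lemma sum_splitA n d (A : {set 'I_n}) (m : outs n d) :
  \sum_j m j = \sum_(j in A) m j + \sum_(j in ~: A) m j.
Proof.
rewrite (bigID (mem A)) /=; congr (_ + _).
by apply: eq_bigl => j; rewrite inE.
Qed.



Definition LAB n d (A : {set 'I_n}) (m : outs n d) : 'Z_d * 'Z_d :=
  (\sum_(j in A) m j, \sum_(j in ~: A) m j).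

Lemma card_AB n d (A : {set 'I_n}) (v : 'Z_d * 'Z_d) : prime d ->
  A != set0 -> ~: A != set0 ->
  (#|[set m : outs n d | LAB A m == v]| * d * d = d ^ n)%N.
Proof.
move=> pd /set0Pn [jA jAA] /set0Pn [kB kBB].
have Hh : forall v v' : 'Z_d * 'Z_d, exists h : outs n d -> outs n d,
    injective h /\ forall x, (LAB A (h x) == v') = (LAB A x == v).
  move=> w w'.
  exists (fun m : outs n d => let m1 := upd m jA (m jA + (w'.1 - w.1)) in
                           upd m1 kB (m1 kB + (w'.2 - w.2))); split.
    by move=> x y /= /upd_inj /upd_inj.
  move=> x; rewrite /LAB /= !sum_upd jAA kBB.
  rewrite inE in kBB; rewrite (negbTE kBB) inE jAA /= addr0 addr0.
  case: w w' => [a b] [a' b'] /=; by rewrite !xpair_eqE !shift_eq.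
have := card_fiber Hh v.
set N := #|[set x | LAB A x == v]|.
rewrite card_ffun !card_prod !card_ord Zp_cast ?prime_gt1 // => E.
by rewrite -mulnA E.
Qed.

Definition qb R n c d (A : {set 'I_n}) (fA fB : ins n c -> 'Z_d) : behaviour R n c d :=
  fun m s => if LAB A m == (fA s, fB s) then d%:R * kap R n d else 0.

Lemma qb_NS R n c d (A : {set 'I_n}) (fA fB : ins n c -> 'Z_d) :
  prime d -> (2 <= n)%N -> A != set0 -> ~: A != set0 ->
  depends_only_on A fA -> depends_only_on (~: A) fB -> in_NS (qb R A fA fB).
Proof.
move=> pd n2 nA nB dA dB; split; first split.
- move=> m s; rewrite /qb; case: ifP => _ //.
  by apply: mulr_ge0; [exact: ler0n | exact/ltW/kap_gt0].
- move=> s; rewrite /qb -big_mkcond /=.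
  rewrite (eq_bigl (mem [set m | LAB A m == (fA s, fB s)])); last by move=> m; rewrite !inE.
  rewrite sumr_const -(mulr_natl (_ * _)).
  have E := card_AB (fA s, fB s) pd nA nB.
  have E2 : (#|[set m : outs n d | LAB A m == (fA s, fB s)]| * d = d ^ n.-1)%N.
    by apply/eqP; rewrite -(eqn_pmul2r (prime_gt0 pd)) E -expnSr prednK // ltnW.
  by rewrite mulrA -natrM E2 kap_card.
move=> S m0 s s' E; rewrite /marginal /qb.
pose M (b : 'Z_d * 'Z_d) := \sum_(m : outs n d | [forall j0 in S, m j0 == m0 j0])
     (if LAB A m == b then d%:R * kap R n d else 0).
have M1 : forall b1 b1' b2, (exists2 j, j \in A & j \notin S) -> M (b1, b2) = M (b1', b2).
  move=> b1 b1' b2 [j jA jS]; rewrite /M -(@sum_shift n d _ _ _ j (b1 - b1')); last first.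
    by move=> m; exact: agree_upd.
  apply: eq_bigr => m _; rewrite /LAB !sum_upd in_setC jA /= addr0.
  by rewrite !xpair_eqE shift_eq.
have M2 : forall b1 b2 b2', (exists2 j, j \in ~: A & j \notin S) -> M (b1, b2) = M (b1, b2').
  move=> b1 b2 b2' [j jA jS]; rewrite /M -(@sum_shift n d _ _ _ j (b2 - b2')); last first.
    by move=> m; exact: agree_upd.
  apply: eq_bigr => m _; rewrite /LAB !sum_upd jA; rewrite in_setC in jA.
  by rewrite (negbTE jA) /= addr0 !xpair_eqE shift_eq.
have step1 : M (fA s, fB s) = M (fA s', fB s).
  have [sub|] := boolP (A \subset S).
    by rewrite (dA s s') // => j jA; apply: E; exact: (subsetP sub).
  by case/subsetPn => j jA jS; apply: M1; exists j.
have step2 : M (fA s', fB s) = M (fA s', fB s').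
  have [sub|] := boolP (~: A \subset S).
    by rewrite (dB s s') // => j jA; apply: E; exact: (subsetP sub).
  by case/subsetPn => j jA jS; apply: M2; exists j.
exact: (etrans step1 step2).
Qed.

Lemma bl_not_vertex R n c d (f : ins n c -> 'Z_d) : prime d -> (2 <= n)%N -> (2 <= c)%N ->
  bipartite_linear f -> ~ is_vertex_NS (pf R f).
Proof.
move=> pd n2 c2 [A [fA [fB [nA nB dA dB Ef]]]] [pNS Hv].
have n0 : (0 < n)%N by apply: ltnW.
pose q := qb R A fA fB.
have qNS : in_NS q := qb_NS R pd n2 nA nB dA dB.
pose D := (d%:R : R).
have D1 : 1 < D by rewrite /D ltr1n prime_gt1.
have D0 : D != 0 by rewrite gt_eqF // (lt_trans ltr01).
have D10 : D - 1 != 0 by rewrite subr_eq0 gt_eqF.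
have Dp : 0 < D - 1 by rewrite subr_gt0.
pose r m s := D / (D - 1) * pf R f m s + (- 1 / (D - 1)) * q m s.
have pq : forall m s, q m s / D <= pf R f m s.
  move=> m s; rewrite /q /qb /pf; case: ifP => [/eqP hL|_].
    have -> : (\sum_j m j == f s).
      by rewrite (sum_splitA A) Ef; case: hL => -> ->.
    by rewrite -/D mulrAC mulfV // mul1r /kap.
  by rewrite mul0r; case: ifP => _ //; exact/ltW/kap_gt0.
have rNS : in_NS r.
  apply: (@NS_comb R n c d (pf R f) q r (D / (D - 1)) (- 1 / (D - 1))) => //.
    by field.
  move=> m s; rewrite /r.
  have -> : D / (D - 1) * pf R f m s + - 1 / (D - 1) * q m s =
            D / (D - 1) * (pf R f m s - q m s / D) by field; rewrite -/D ?D0 ?D10.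
  apply: mulr_ge0; first by rewrite divr_ge0 // ltW // (lt_trans ltr01).
  by rewrite subr_ge0.
have decomp : forall m s, pf R f m s = D^-1 * q m s + (1 - D^-1) * r m s.
  by move=> m s; rewrite /r; field; rewrite -/D ?D0 ?D10.
have t0 : 0 < D^-1 by rewrite invr_gt0 (lt_trans ltr01).
have t1 : D^-1 < 1 by rewrite invf_lt1 // (lt_trans ltr01).
have [eq1 _] := Hv q r D^-1 qNS rNS t0 t1 decomp.
pose s0 : ins n c := [ffun _ => Ordinal (ltnW c2)].
have E := card_AB (fA s0 + 1, fB s0 - 1) pd nA nB.
have : (0 < #|[set m : outs n d | LAB A m == ((fA s0 + 1)%R, (fB s0 - 1)%R)]|)%N.
  rewrite lt0n; apply/negP => /eqP H0; move: E; rewrite H0 !mul0n => /esym/eqP.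
  by rewrite expn_eq0 eqn0Ngt prime_gt0.
case/card_gt0P => m; rewrite inE => /eqP Lm.
have := eq1 m s0; rewrite /q /qb /pf Lm xpair_eqE.
have -> : (fA s0 + 1 == fA s0) = false.
  by apply/negP => /eqP/(congr1 (fun x => x - fA s0)); rewrite addrC addKr subrr; apply/eqP; rewrite oner_eq0.
have -> : (\sum_j m j == f s0).
  by rewrite (sum_splitA A) Ef; case: Lm => -> ->; apply/eqP; ring.
by move=> /= /eqP; rewrite eq_sym gt_eqF // kap_gt0.
Qed.



Definition agr n d (S : {set 'I_n}) (m m0 : outs n d) := [forall j in S, m j == m0 j].

Lemma agr_refl n d S (m : outs n d) : agr S m m.
Proof. by apply/forallP => j; rewrite eqxx implybT. Qed.

Lemma agr_sym n d S (m m0 : outs n d) : agr S m m0 = agr S m0 m.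
Proof. by apply: eq_forallb => j; rewrite eq_sym. Qed.

Lemma agr_trans n d S (m1 m2 m3 : outs n d) : agr S m1 m2 -> agr S m2 m3 -> agr S m1 m3.
Proof.
move=> /forallP H1 /forallP H2; apply/forallP => j; apply/implyP => jS.
by move: (H1 j) (H2 j); rewrite jS /= => /eqP -> .
Qed.

Lemma sum_dep R n c d (q : behaviour R n c d) (S : {set 'I_n}) (g : outs n d -> R) (s s' : ins n c) :
  in_NS q -> (forall m m', agr S m m' -> g m = g m') -> (forall j, j \in S -> s j = s' j) ->
  \sum_m g m * q m s = \sum_m g m * q m s'.
Proof.
move=> [_ mq] Hg E.
pose N (m : outs n d) : R := (#|[set m0 | agr S m m0]|)%:R.
have N0 : forall m, N m != 0.
  move=> m; rewrite /N pnatr_eq0 -lt0n; apply/card_gt0P; exists m; by rewrite inE agr_refl.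
have NE : forall m m0, agr S m m0 -> N m0 = N m.
  move=> m m0 a; rewrite /N; congr (_%:R); apply: eq_card => x; rewrite !inE.
  apply/idP/idP => h; [exact: agr_trans a h | ].
  by apply: agr_trans h; rewrite agr_sym.
have key : forall s1, \sum_m g m * q m s1 =
    \sum_(m0 : outs n d) (g m0 / N m0) * marginal q S m0 s1.
  move=> s1; rewrite /marginal.
  under [RHS]eq_bigr do rewrite mulr_sumr.
  rewrite (exchange_big_dep predT) //=.
  apply: eq_bigr => m _.
  rewrite -mulr_suml.
  have -> : \sum_(i : outs n d | [forall j in S, m j == i j]) g i / N i =
            \sum_(i : outs n d | agr S m i) g m / N m.
    apply: eq_big => [i|i a]; first by [].
    by rewrite (NE _ _ a) (Hg _ _ a).
  rewrite sumr_const.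
  have -> : #|[pred i | agr S m i]| = #|[set m0 | agr S m m0]|.
    by apply: eq_card => i; rewrite !inE.
  by rewrite -mulr_natr -/(N m) mulfVK.
rewrite !key; apply: eq_bigr => m0 _; congr (_ * _); exact: mq.
Qed.



Lemma upd_comm (I : finType) (T : Type) (s : {ffun I -> T}) j l v w : j != l ->
  upd (upd s j v) l w = upd (upd s l w) j v.
Proof.
move=> jl; apply/ffunP => i; rewrite !updE.
case: (i =P l) => [->|_]; last by [].
by rewrite eq_sym (negbTE jl).
Qed.

Lemma mixed_bl n c d (f : ins n c -> 'Z_d) (A : {set 'I_n}) : (0 < c)%N ->
  A != set0 -> ~: A != set0 ->
  (forall s j l v w, j \in A -> l \notin A ->
     f (upd (upd s j v) l w) - f (upd s j v) - f (upd s l w) + f s = 0) ->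
  bipartite_linear f.
Proof.
move=> c0 nA nB Hm.
pose s0 : ins n c := [ffun _ => Ordinal c0].
pose mixA (s : ins n c) : ins n c := [ffun i => if i \in A then s i else s0 i].
pose fA s := f (mixA s).
exists A, fA, (fun s => f s - fA s); split => //; last by move=> s; ring.
  move=> s s' E; rewrite /fA; congr f; apply/ffunP => i; rewrite !ffunE.
  by case: ifP => // iA; rewrite E.
apply: single_change_ind => s j v; rewrite in_setC negbK => jA.
have mixU : mixA (upd s j v) = upd (mixA s) j v.
  apply/ffunP => i; rewrite !ffunE; case: (i =P j) => [->|_] //; by rewrite jA.
pose h x := f (upd x j v) - f x.
have hh : h s = h (mixA s).
  apply: (@single_change_ind _ _ _ A h) => [x l w lA|i iA]; last first.
    by rewrite ffunE iA.
  have jl : j != l by apply: contraNneq lA => <-.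
  rewrite /h upd_comm 1?eq_sym //.
  have := Hm x j l v w jA lA => H.
  apply/eqP; rewrite -subr_eq0; apply/eqP; rewrite -H; ring.
rewrite /fA mixU.
have e1 : f (upd s j v) = h s + f s by rewrite /h; ring.
have e2 : f (upd (mixA s) j v) = h (mixA s) + f (mixA s) by rewrite /h; ring.
rewrite e1 e2 hh; ring.
Qed.



Definition Dd R n c d (q : behaviour R n c d) (a : outs n d) (s : ins n c) (b : 'Z_d) : R :=
  \sum_(m | dot a m == b) q m s.

Definition supp R n c d (f : ins n c -> 'Z_d) (q : behaviour R n c d) :=
  forall (m : outs n d) s, \sum_j m j != f s -> q m s = 0.

Definition ashift n d (a : outs n d) k : outs n d := [ffun j => a j - a k].

Lemma dot_ashift n d (a m : outs n d) k : dot (ashift a k) m = dot a m - a k * \sum_j m j.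
Proof.
rewrite /dot mulr_sumr -sumrB; apply: eq_bigr => j _; rewrite ffunE; ring.
Qed.

Lemma Dd_ashift R n c d (f : ins n c -> 'Z_d) (q : behaviour R n c d) (a : outs n d) (s : ins n c) (b : 'Z_d) k :
  supp f q -> Dd q a s b = Dd q (ashift a k) s (b - a k * f s).
Proof.
move=> sq; rewrite /Dd !(big_mkcond (fun m => _ == _)) /=; apply: eq_bigr => m _.
have [e|ne] := eqVneq (\sum_j m j) (f s); last by rewrite sq //; case: ifP; case: ifP.
rewrite dot_ashift e; congr (if _ then _ else _).
apply/eqP/eqP => [->|h]; first by [].
by rewrite -(subrK (a k * f s) (dot a m)) h subrK.
Qed.

Lemma Dd_indep R n c d (q : behaviour R n c d) (a : outs n d) (s : ins n c) (b : 'Z_d) k v :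
  in_NS q -> a k = 0 -> Dd q a (upd s k v) b = Dd q a s b.
Proof.
move=> qNS ak.
have E : forall s1, Dd q a s1 b = \sum_m (if dot a m == b then 1 else 0) * q m s1.
  move=> s1; rewrite /Dd big_mkcond /=; apply: eq_bigr => m _.
  by case: ifP; rewrite ?mul1r ?mul0r.
rewrite !E; apply: (sum_dep (S := ~: [set k])) => //.
  move=> m m' /forallP ag; congr (if _ then _ else _); congr (_ == _).
  apply: eq_bigr => j _.
  have [->|jk] := eqVneq j k; first by rewrite ak !mul0r.
  by have := ag j; rewrite !inE jk /= => /eqP ->.
by move=> j; rewrite !inE updE => /negbTE ->.
Qed.

Lemma Dd_trans R n c d (f : ins n c -> 'Z_d) (q : behaviour R n c d) (a : outs n d) (s : ins n c) (b : 'Z_d) k v :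
  in_NS q -> supp f q ->
  Dd q a (upd s k v) b = Dd q a s (b - a k * f (upd s k v) + a k * f s).
Proof.
move=> qNS sq.
have ak : ashift a k k = 0 by rewrite ffunE subrr.
rewrite (Dd_ashift _ _ _ k sq) Dd_indep // [RHS](Dd_ashift _ _ _ k sq).
by rewrite addrK.
Qed.


Definition cstb R n c d (q : behaviour R n c d) (a : outs n d) (s : ins n c) :=
  [forall b, Dd q a s b == Dd q a s 0].

Lemma cst_transl (R : eqType) d (G G' : 'Z_d -> R) (e : 'Z_d) : (forall b, G' b = G (b + e)) ->
  [forall b, G' b == G' 0] = [forall b, G b == G 0].
Proof.
move=> H; apply/forallP/forallP => K b.
  have h1 : G b = G' (b - e) by rewrite H subrK.
  have h2 : G 0 = G' (- e) by rewrite H addNr.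
  by rewrite h1 h2 (eqP (K _)) (eqP (K (- e))).
by rewrite !H add0r (eqP (K _)) (eqP (K e)).
Qed.

Lemma cst_upd R n c d (f : ins n c -> 'Z_d) (q : behaviour R n c d) (a : outs n d) s k v :
  in_NS q -> supp f q -> cstb q a (upd s k v) = cstb q a s.
Proof.
move=> qNS sq; rewrite /cstb; apply: (cst_transl (e := - (a k * f (upd s k v)) + a k * f s)) => b.
rewrite (Dd_trans _ _ _ _ _ qNS sq); congr Dd; by rewrite addrA.
Qed.

Lemma cst_all R n c d (f : ins n c -> 'Z_d) (q : behaviour R n c d) (a : outs n d) s s' :
  in_NS q -> supp f q -> cstb q a s = cstb q a s'.
Proof.
move=> qNS sq; apply: (@single_change_ind _ _ _ set0) => [x j v _|j]; last by rewrite inE.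
exact: (cst_upd _ _ _ _ qNS sq).
Qed.

Lemma mixed_zero R n c d (f : ins n c -> 'Z_d) (q : behaviour R n c d) (a : outs n d) s k l v w :
  prime d -> in_NS q -> supp f q -> ~~ cstb q a s -> a k != a l ->
  f (upd (upd s k v) l w) - f (upd s k v) - f (upd s l w) + f s = 0.
Proof.
move=> pd qNS sq ncst akl.
have kl : k != l by apply: contraNneq akl => ->.
set fkl := f (upd (upd s k v) l w); set fk := f (upd s k v); set fl := f (upd s l w).
pose G := Dd q a s.
pose X := - a l * fkl + a l * fk - a k * fk + a k * f s.
pose Y := - a k * fkl + a k * fl - a l * fl + a l * f s.
have H1 : forall b, Dd q a (upd (upd s k v) l w) b = G (b + X).
  move=> b; rewrite (Dd_trans _ _ _ _ _ qNS sq) (Dd_trans _ _ _ _ _ qNS sq).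
  rewrite /G /X -/fk -/fkl; congr Dd; ring.
have H2 : forall b, Dd q a (upd (upd s k v) l w) b = G (b + Y).
  move=> b; rewrite upd_comm // (Dd_trans _ _ _ _ _ qNS sq) (Dd_trans _ _ _ _ _ qNS sq).
  rewrite -upd_comm // /G /Y -/fl -/fkl; congr Dd; ring.
have HG : forall x, G (x + (Y - X)) = G x.
  move=> x; have := H1 (x - X); rewrite H2 subrK => <-; congr G; ring.
have YX : Y - X = 0.
  apply/eqP; apply: contraNT ncst => nz.
  apply/forallP => b; apply/eqP; exact: (Zd_stab pd nz HG).
have akl0 : a k - a l != 0 by rewrite subr_eq0.
apply: (Zd_mul_eq0 pd akl0).
have -> : (a k - a l) * (fkl - fk - fl + f s) = - (Y - X) by rewrite /X /Y; ring.
by rewrite YX oppr0.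
Qed.



Lemma Dd_sum R n c d (q : behaviour R n c d) (a : outs n d) s :
  in_NS q -> \sum_b Dd q a s b = 1.
Proof.
move=> [[_ sq] _]; rewrite -(sq s) (partition_big (fun m => dot a m) predT) //=.
Qed.

Lemma nonconst_unif R n c d (f : ins n c -> 'Z_d) (q : behaviour R n c d) (a : outs n d) k l :
  prime d -> (0 < c)%N -> in_NS q -> supp f q -> ~ bipartite_linear f -> a k != a l ->
  forall s b, Dd q a s b * d%:R = 1.
Proof.
move=> pd c0 qNS sq nbl akl.
have cst : forall s, cstb q a s.
  move=> s; apply: contraT => ncst; exfalso; apply: nbl.
  apply: (@mixed_bl _ _ _ _ [set j | a j == a k]) => //.
  - by apply/set0Pn; exists k; rewrite inE.
  - by apply/set0Pn; exists l; rewrite !inE eq_sym.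
  move=> s1 j l1 v w; rewrite !inE => /eqP ajk al1.
  apply: (@mixed_zero _ _ _ _ f q a s1 j l1 v w pd qNS sq); first by rewrite (cst_all a s1 s qNS sq).
  by rewrite ajk eq_sym.
move=> s b; have /forallP H := cst s.
have := Dd_sum a s qNS.
under eq_bigr do rewrite (eqP (H _)).
rewrite sumr_const card_ord Zp_cast ?prime_gt1 // => E.
by rewrite (eqP (H b)) mulr_natr.
Qed.

Lemma dot_sub n d (a m x : outs n d) : dot a m - dot a x = dot (m - x) a.
Proof.
rewrite /dot -sumrB; apply: eq_bigr => j _; rewrite !ffunE; ring.
Qed.

Lemma card_eqx n d (m x : outs n d) : prime d -> (0 < n)%N ->
  #|[set a : outs n d | dot a m == dot a x]| = if m == x then (d ^ n)%N else (d ^ n.-1)%N.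
Proof.
move=> pd n0; case: eqP => [->|ne].
  rewrite (eq_card (B := predT)); last by move=> a; rewrite !inE eqxx.
  by rewrite cardT -cardE card_ffun !card_ord Zp_cast ?prime_gt1.
rewrite -(@card_dot n d (m - x) 0 pd n0); last by rewrite subr_eq0; apply/eqP.
by apply: eq_card => a; rewrite !inE -dot_sub subr_eq0.
Qed.

Lemma exch R n c d (q : behaviour R n c d) s (x : outs n d) :
  \sum_(a : outs n d) Dd q a s (dot a x) =
  \sum_(m : outs n d) q m s * (#|[set a : outs n d | dot a m == dot a x]|)%:R.
Proof.
rewrite /Dd (exchange_big_dep predT) //=; apply: eq_bigr => m _.
rewrite (eq_bigl (mem [set a : outs n d | dot a m == dot a x])); last by move=> a /=; rewrite !inE.
by rewrite sumr_const mulr_natr.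
Qed.

Lemma Dd_cst_one R n c d (f : ins n c -> 'Z_d) (q : behaviour R n c d) (a : outs n d) s (x : outs n d) :
  (0 < n)%N -> in_NS q -> supp f q -> \sum_j x j = f s -> [forall k, forall l, a k == a l] ->
  Dd q a s (dot a x) = 1.
Proof.
move=> n0 [[_ s1] _] sq xs /forallP ac.
pose i0 := Ordinal n0.
have da : forall m, dot a m = a i0 * \sum_j m j.
  move=> m; rewrite /dot mulr_sumr; apply: eq_bigr => j _.
  by have /forallP/(_ i0)/eqP -> := ac j.
rewrite -(s1 s) /Dd big_mkcond /=; apply: eq_bigr => m _.
have [e|ne] := eqVneq (\sum_j m j) (f s); last by rewrite sq //; case: ifP.
by rewrite !da e xs eqxx.
Qed.

Lemma sum_W R n c d (f : ins n c -> 'Z_d) (q : behaviour R n c d) s (x : outs n d) :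
  prime d -> (0 < n)%N -> (0 < c)%N -> in_NS q -> supp f q -> ~ bipartite_linear f ->
  \sum_j x j = f s ->
  \sum_(a : outs n d) Dd q a s (dot a x) =
  \sum_(a : outs n d) (if [forall k, forall l, a k == a l] then 1 else (d%:R : R)^-1).
Proof.
move=> pd n0 c0 qNS sq nbl xs; apply: eq_bigr => a _; case: ifP => [ac|].
  exact: (Dd_cst_one n0 qNS sq xs ac).
move/negbT; rewrite negb_forall => /existsP [k]; rewrite negb_forall => /existsP [l akl].
have dnz : (d%:R : R) != 0 by rewrite pnatr_eq0 -lt0n prime_gt0.
apply: (mulIf dnz); rewrite mulVf //.
exact: (nonconst_unif pd c0 qNS sq nbl akl).
Qed.

Lemma sum_LK R n c d (q : behaviour R n c d) s (x : outs n d) (L K : R) :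
  in_NS q -> \sum_m q m s * (if m == x then L else K) = K + (L - K) * q x s.
Proof.
move=> [[_ s1] _].
have e1 := s1 s; rewrite (bigD1 x) //= in e1.
rewrite (bigD1 x) //= eqxx.
rewrite (eq_bigr (fun m => q m s * K)); last by move=> m /negbTE ->.
rewrite -mulr_suml.
have -> : \sum_(i | i != x) q i s = 1 - q x s by rewrite -e1 addrC addrK.
ring.
Qed.

Lemma q_unique R n c d (f : ins n c -> 'Z_d) (q1 q2 : behaviour R n c d) :
  prime d -> (0 < n)%N -> (0 < c)%N -> ~ bipartite_linear f ->
  in_NS q1 -> supp f q1 -> in_NS q2 -> supp f q2 -> forall m s, q1 m s = q2 m s.
Proof.
move=> pd n0 c0 nbl N1 S1 N2 S2 x s.
have [xs|ne] := eqVneq (\sum_j x j) (f s); last by rewrite S1 // S2.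
have key : forall q, in_NS q -> supp f q ->
   (d ^ n.-1)%:R + ((d ^ n)%:R - (d ^ n.-1)%:R) * q x s =
   \sum_(a : outs n d) (if [forall k, forall l, a k == a l] then 1 else (d%:R : R)^-1).
  move=> q qN qS; rewrite -(sum_W pd n0 c0 qN qS nbl xs) exch -sum_LK //.
  apply: eq_bigr => m _; rewrite card_eqx //; by case: (m == x).
have e := key q2 N2 S2; rewrite -(key q1 N1 S1) in e.
have nz : ((d ^ n)%:R - (d ^ n.-1)%:R : R) != 0.
  rewrite subr_eq0 eqr_nat neq_ltn.
  by apply/orP; right; rewrite ltn_exp2l ?prime_gt1 //; case: (n) n0.
by move/addrI/(mulfI nz): e.
Qed.



Lemma supp_mix R n c d (f : ins n c -> 'Z_d) (q r : behaviour R n c d) (t : R) :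
  in_NS q -> in_NS r -> 0 < t -> t < 1 ->
  (forall m s, pf R f m s = t * q m s + (1 - t) * r m s) -> supp f q /\ supp f r.
Proof.
move=> [[q0 _] _] [[r0 _] _] t0 t1 E.
have t1' : 0 < 1 - t by rewrite subr_gt0.
suff H : forall (m : outs n d) s, \sum_j m j != f s -> t * q m s = 0 /\ (1 - t) * r m s = 0.
  split=> m s ne; have [h1 h2] := H m s ne.
    by move/eqP: h1; rewrite mulf_eq0 gt_eqF //= => /eqP.
  by move/eqP: h2; rewrite mulf_eq0 gt_eqF //= => /eqP.
move=> m s ne; have := E m s; rewrite /pf (negbTE ne) => /esym/eqP.
rewrite paddr_eq0; [ | exact: mulr_ge0 (ltW t0) (q0 m s) | exact: mulr_ge0 (ltW t1') (r0 m s)].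
by case/andP => /eqP -> /eqP ->.
Qed.

Unset Implicit Arguments.

Theorem proposition2 (R : realFieldType) (n c d : nat)
  (hn : (2 <= n)%N) (hc : (2 <= c)%N) (hd : prime d)
  (f : ins n c -> 'Z_d) :
  is_vertex_NS (pf R f) <-> ~ bipartite_linear f.
Proof.
have n0 : (0 < n)%N by apply: ltnW.
have c0 : (0 < c)%N by apply: ltnW.
split; first by move=> V bl; exact: (bl_not_vertex hd hn hc bl V).
move=> nbl; split; first exact: pf_NS.
move=> q r t qN rN t0 t1 E.
have [sq sr] := supp_mix qN rN t0 t1 E.
have pN := pf_NS R f hd n0.
have sp : supp f (pf R f) by move=> m s ne; rewrite /pf (negbTE ne).
split; apply: (q_unique hd n0 c0 nbl) => //.
Qed.
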